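(* Let $\kappa$ be a regular uncountable cardinal with $\kappa^{<\kappa}=\kappa$ and $\gamma^\omega<\kappa$ for all $\gamma<\kappa$. There is a $\kappa$-representation $\langle I^0_\alpha\mid\alpha<\kappa\rangle$ of $I^0$ such that for every limit ordinal $\delta<\kappa$ and every $\nu\in I^0$ there is $\beta<\delta$ satisfying: for every $\sigma\in I^0_\delta$ with $\sigma>\nu$ there is $\sigma'\in I^0_\beta$ with $\sigma\ge\sigma'\ge\nu$.
   Context: Let $\mathbb Q$ be the rationals and order $\kappa\times\mathbb Q$ lexicographically. $I^0$ is the set of functions $f:\omega\to\kappa\times\mathbb Q$, written $f(n)=(f_1(n),f_2(n))$, such that $\{n<\omega\mid f_1(n)\ne0\}$ is finite, ordered by $f<g$ iff $f(n)<g(n)$ for the least $n$ with $f(n)\ne g(n)$. A $\kappa$-representation of a set $A$ of size $\le\kappa$ is an increasing continuous sequence of subsets of $A$, each of size $<\kappa$, whose union is $A$. *)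

(* Defs.v *)
From mathcomp Require Import all_boot all_order all_algebra.
Set Implicit Arguments. Unset Strict Implicit. Unset Printing Implicit Defensive.
Import Order.TTheory GRing.Theory Num.Theory.

Definition le_card (A B : Type) : Prop := exists f : A -> B, injective f.
Definition lt_card (A B : Type) : Prop := le_card A B /\ ~ le_card B A.

Section Kappa.
Variables (K : Type) (ltK : K -> K -> Prop).

Definition strict_wellorder : Prop :=
  well_founded ltK /\
  (forall x, ~ ltK x x) /\
  (forall x y z, ltK x y -> ltK y z -> ltK x z) /\
  (forall x y, ltK x y \/ x = y \/ ltK y x).

(* initial segment {b | b < a}, i.e. the ordinal a < kappa *)
Definition seg (a : K) : Type := {b : K | ltK b a}.

(* (K, ltK) is an initial ordinal, i.e. a cardinal: every alpha < kappa
   has cardinality < kappa *)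
Definition is_cardinal : Prop := forall a, lt_card (seg a) K.

Definition uncountable : Prop := ~ le_card K nat.

Definition regular : Prop :=
  forall S : K -> Prop, lt_card {x : K | S x} K -> exists b, forall x, S x -> ltK x b.

(* kappa^{<kappa} = kappa : the set of all functions gamma -> kappa, gamma < kappa,
   has size <= kappa (>= is automatic) *)
Definition kappa_lt_kappa_eq : Prop := le_card {a : K & (seg a -> K)} K.

Definition pow_omega_below : Prop := forall a, lt_card (nat -> seg a) K.

Definition is_limit (d : K) : Prop :=
  (exists b, ltK b d) /\ (forall b, ltK b d -> exists c, ltK b c /\ ltK c d).

Definition leK (x y : K) : Prop := ltK x y \/ x = y.

Definition is_zero (x : K) : Prop := forall y, ~ ltK y x.

Definition ltKQ (p q : K * rat) : Prop :=
  ltK p.1 q.1 \/ (p.1 = q.1 /\ (p.2 < q.2)%R).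

Definition fin_supp (f : nat -> K * rat) : Prop :=
  exists N : nat, forall n, (N <= n)%N -> is_zero (f n).1.

Definition I0 : Type := {f : nat -> K * rat | fin_supp f}.

Definition I0lt (f g : I0) : Prop :=
  exists n, (forall m, (m < n)%N -> proj1_sig f m = proj1_sig g m) /\
            ltKQ (proj1_sig f n) (proj1_sig g n).

Definition I0le (f g : I0) : Prop := I0lt f g \/ f = g.

(* kappa-representation of I^0 : an increasing continuous sequence of subsets,
   each of size < kappa, whose union is I^0 *)
Definition kappa_representation (Rep : K -> I0 -> Prop) : Prop :=
  (forall a b, leK a b -> forall x, Rep a x -> Rep b x) /\
  (forall d, is_limit d -> forall x, Rep d x -> exists a, ltK a d /\ Rep a x) /\
  (forall a, lt_card {x : I0 | Rep a x} K) /\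
  (forall x, exists a, Rep a x).

End Kappa.

(* Main.v *)
Require Import Defs.
From mathcomp Require Import all_boot all_order all_algebra.
From mathcomp Require Import lra.
From Stdlib Require Import Classical ClassicalEpsilon FunctionalExtensionality ProofIrrelevance.

Lemma sig_inj (A : Type) (P : A -> Prop) (u v : {a | P a}) :
  proj1_sig u = proj1_sig v -> u = v.
Proof.
case: u => a pa; case: v => b pb /= e; subst; f_equal; apply: proof_irrelevance.
Qed.

Lemma le_card_trans {A B C} : le_card A B -> le_card B C -> le_card A C.
Proof.
case=> f Hf [g Hg]; exists (fun x => g (f x)) => x y /Hg /Hf //.
Qed.

Section Aux.
Context {K : Type} {ltK : K -> K -> Prop} (Hwo : strict_wellorder ltK).

Lemma ltK_trans {x y z} : ltK x y -> ltK y z -> ltK x z.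
Proof. case: Hwo => _ [_ [Ht _]]; exact: Ht. Qed.

Lemma ltK_irr x : ~ ltK x x.
Proof. case: Hwo => _ [Hi _]; exact: Hi. Qed.

Lemma ltK_tri x y : ltK x y \/ x = y \/ ltK y x.
Proof. case: Hwo => _ [_ [_ Ht]]; exact: Ht. Qed.

Lemma zero_lt {z c b} : is_zero ltK z -> ltK c b -> ltK z b.
Proof.
move=> Hz Hcb; case: (ltK_tri z c) => [H|[H|H]].
- exact: ltK_trans H Hcb.
- by subst.
- by case: (Hz c).
Qed.

Lemma ex_zero (x : K) : exists z, is_zero ltK z.
Proof.
case: Hwo => Hwf _.
induction x as [x IH] using (well_founded_ind Hwf).
case: (classic (is_zero ltK x)) => Hz; first by exists x.
have [y Hy] : exists y, ltK y x.
  apply: NNPP => Hn; apply: Hz => y Hy; apply: Hn; by exists y.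
exact: IH Hy.
Qed.

Lemma fin_bound (B : K -> Prop) (HB0 : exists c, B c)
  (HBs : forall w, B w -> exists c, B c /\ ltK w c) (f : nat -> K) (P : nat -> Prop) M :
  (forall m, (m < M)%N -> P m -> B (f m)) ->
  exists b, B b /\ (exists c, ltK c b) /\ forall m, (m < M)%N -> P m -> ltK (f m) b.
Proof.
elim: M => [|M IH] H.
- case: HB0 => c0 Hc0; case: (HBs c0 Hc0) => c [Hc Hlt].
  exists c; split=> //; split; first by exists c0. by [].
- case: IH => [m Hm Pm|b [Bb [Hc Hb]]].
    by apply: H => //; apply: leqW.
  case: (classic (P M)) => PM; last first.
    exists b; split=> //; split=> // m; rewrite ltnS leq_eqVlt => /orP[/eqP->|Hm] Pm.
      by [].
    exact: Hb.
  have BfM : B (f M) := H M (ltnSn M) PM.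
  have [w [Bw [Hbw Hfw]]] : exists w, B w /\ leK ltK b w /\ leK ltK (f M) w.
    case: (ltK_tri b (f M)) => [h|[h|h]].
    + by exists (f M); split=> //; split; [left|right].
    + by exists b; split=> //; split; right.
    + by exists b; split=> //; split; [right|left].
  case: (HBs w Bw) => c [Bc Hwc].
  have le_lt : forall x, leK ltK x w -> ltK x c.
    by move=> x [h|->] //; apply: ltK_trans h Hwc.
  exists c; split=> //; split; first by exists b; apply: le_lt.
  move=> m; rewrite ltnS leq_eqVlt => /orP[/eqP->|Hm] Pm; apply: le_lt => //.
  left; have := Hb m Hm Pm; case: Hbw => [h'|<-] // h''.
  exact: ltK_trans h'' h'.
Qed.

Lemma no_max (Hunc : uncountable K) (Hreg : regular ltK) (x : K) : exists y, ltK x y.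
Proof.
have [b Hb] : exists b, forall y, y = x -> ltK y b.
  apply: Hreg; split.
  - exists (@proj1_sig K (fun y => y = x)) => u v; exact: sig_inj.
  - case=> f Hf; apply: Hunc; exists (fun _ => 0%N) => u v _; apply: Hf.
    apply: sig_inj; by rewrite (proj2_sig (f u)) (proj2_sig (f v)).
by exists b; apply: Hb.
Qed.

Lemma omega_seg (Hunc : uncountable K) (Hreg : regular ltK) (x0 : K) :
  exists w, le_card nat (seg ltK w).
Proof.
pose Hs := fun x => constructive_indefinite_description _ (no_max Hunc Hreg x).
pose s := fix s (n : nat) : K := match n with 0 => x0 | n.+1 => proj1_sig (Hs (s n)) end.
have sinc : forall m n, (m < n)%N -> ltK (s m) (s n).
  move=> m; elim=> [//|n IH]; rewrite ltnS leq_eqVlt => /orP[/eqP->|Hm] /=.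
    exact: proj2_sig (Hs (s n)).
  apply: ltK_trans (IH Hm) _; exact: proj2_sig (Hs (s n)).
have sinj : injective s.
  move=> m n e; case: (ltngtP m n) => // h.
  - by case: (ltK_irr (s n)); rewrite -{1}e; apply: sinc.
  - by case: (ltK_irr (s n)); rewrite -{2}e; apply: sinc.
have [b Hb] : exists b, forall y, (exists n, y = s n) -> ltK y b.
  apply: (Hreg); split.
  - exists (@proj1_sig K _) => u v; exact: sig_inj.
  - case=> f Hf; apply: (Hunc).
    pose g := fun (u : {y | exists n, y = s n}) =>
      proj1_sig (constructive_indefinite_description _ (proj2_sig u)).
    exists (fun x => g (f x)) => u v e; apply: Hf; apply: sig_inj.
    rewrite (proj2_sig (constructive_indefinite_description _ (proj2_sig (f u)))).
    rewrite (proj2_sig (constructive_indefinite_description _ (proj2_sig (f v)))).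
    by rewrite /g in e; rewrite e.
exists b; exists (fun n => exist _ (s n) (Hb _ (ex_intro _ n erefl))).
move=> m n e; apply: sinj; exact: (f_equal (@proj1_sig _ _) e).
Qed.

Lemma widen_seg {a a'} : leK ltK a a' -> seg ltK a -> seg ltK a'.
Proof.
move=> h u; exists (proj1_sig u); case: h => [h|<-]; last exact: proj2_sig u.
exact: ltK_trans (proj2_sig u) h.
Defined.

Lemma widen_seg_inj {a a'} (h : leK ltK a a') : injective (widen_seg h).
Proof. move=> u v e; apply: sig_inj; exact: (f_equal (@proj1_sig _ _) e). Qed.

Lemma size_seg (Hunc : uncountable K) (Hreg : regular ltK) a :
  exists a', le_card (nat -> seg ltK a * rat) (nat -> seg ltK a').
Proof.
have [w [e He]] := omega_seg Hunc Hreg a.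
have [a' [Ha Hw]] : exists a', leK ltK a a' /\ leK ltK w a'.
  case: (ltK_tri a w) => [h|[h|h]].
  + by exists w; split; [left|right].
  + by exists w; subst; split; right.
  + by exists a; split; [right|left].
exists a'.
pose F := fun (h : nat -> seg ltK a * rat) (n : nat) =>
  if odd n then widen_seg Hw (e (pickle (h n./2).2)) else widen_seg Ha (h n./2).1.
exists F => h h' E; apply: functional_extensionality => n.
have E1 := f_equal (fun G => G n.*2) E.
have E2 := f_equal (fun G => G n.*2.+1) E.
rewrite /F /= odd_double doubleK in E1.
rewrite /F /= odd_double uphalf_double /= in E2.
move/widen_seg_inj: E1 => E1; move/widen_seg_inj/He: E2 => /(pcan_inj (@pickleK _)) E2.
by case: (h n) E1 E2 => ? ? ; case: (h' n) => ? ? /= -> ->.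
Qed.

End Aux.

Definition RepC {K : Type} {ltK : K -> K -> Prop} (a : K) (x : I0 ltK) : Prop :=
  forall n, ltK (proj1_sig x n).1 a.

Lemma RepC_size (K : Type) (ltK : K -> K -> Prop) (Hwo : strict_wellorder ltK)
  (Hunc : uncountable K) (Hreg : regular ltK) (Homega : pow_omega_below ltK) a :
  lt_card {x : I0 ltK | RepC a x} K.
Proof.
have [a' Ha'] := size_seg Hwo Hunc Hreg a.
have Hr : le_card {x : I0 ltK | RepC a x} (nat -> seg ltK a * rat).
  exists (fun (u : {x : I0 ltK | RepC a x}) n => (exist (fun y => ltK y a) (proj1_sig (proj1_sig u) n).1 (@proj2_sig _ (RepC a) u n),
                      (proj1_sig (proj1_sig u) n).2)).
  move=> u v e; apply: sig_inj; apply: sig_inj; apply: functional_extensionality => n.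
  have := f_equal (fun G => G n) e => /= [[e1 e2]].
  by case: (proj1_sig (proj1_sig u) n) e1 e2 => ? ?; case: (proj1_sig (proj1_sig v) n) => ? ? /= -> ->.
case: (Homega a') => H1 H2; split.
- exact: le_card_trans (le_card_trans Hr Ha') H1.
- move=> H; apply: H2; exact: le_card_trans (le_card_trans H Hr) Ha'.
Qed.

Theorem mainTheorem8 (K : Type) (ltK : K -> K -> Prop)
  (Hwo : strict_wellorder ltK)
  (Hcard : is_cardinal ltK)
  (Hunc : uncountable K)
  (Hreg : regular ltK)
  (Hpow : kappa_lt_kappa_eq ltK)
  (Homega : pow_omega_below ltK) :
  exists Rep : K -> I0 ltK -> Prop,
    kappa_representation Rep /\
    forall d : K, is_limit ltK d ->
      forall nu : I0 ltK, exists b : K, ltK b d /\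
        forall s : I0 ltK, Rep d s -> I0lt nu s ->
          exists s' : I0 ltK, Rep b s' /\ I0le s' s /\ I0le nu s'.
Proof.
exists (@RepC K ltK); split.
  split; [|split; [|split]].
  - move=> a b [h|<-] x Hx n //; have := Hx n; move=> hx; exact (ltK_trans Hwo hx h).
  - move=> d [Hd0 Hds] [f [N HN]] Hx.
    have [b [Bb [[c Hc] Hb]]] := fin_bound Hwo (fun y => ltK y d) Hd0
      (fun w Bw => let: ex_intro c (conj h1 h2) := Hds w Bw in ex_intro _ c (conj h2 h1))
      (fun n => (f n).1) (fun _ => True) N (fun m _ _ => Hx m).
    exists b; split=> // n /=.
    case: (ltnP n N) => hn; first exact: Hb.
    exact (zero_lt Hwo (HN n hn) Hc).
  - exact: RepC_size.
  - move=> [f [N HN]].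
    have [b [_ [[c Hc] Hb]]] := fin_bound Hwo (fun _ => True) (ex_intro _ (f 0%N).1 I)
      (fun w _ => let: ex_intro c h := no_max Hunc Hreg w in ex_intro _ c (conj I h))
      (fun n => (f n).1) (fun _ => True) N (fun _ _ _ => I).
    exists b => n /=.
    case: (ltnP n N) => hn; first exact: Hb.
    exact (zero_lt Hwo (HN n hn) Hc).
move=> d [Hd0 Hds] [fn [M HM]].
have [b [Bb [[c Hc] Hb]]] := fin_bound Hwo (fun y => ltK y d) Hd0
  (fun w Bw => let: ex_intro c (conj h1 h2) := Hds w Bw in ex_intro _ c (conj h2 h1))
  (fun n => (fn n).1) (fun m => forall k, (k <= m)%N -> ltK (fn k).1 d) M
  (fun m _ Pm => Pm m (leqnn m)).
have [z Hz] := ex_zero Hwo b.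
exists b; split=> // -[sv Hsv] Hs [n [Hag Hlt]] /=.
rewrite /RepC /= in Hs; simpl in Hag, Hlt.
have Pn : forall m, (m <= n)%N -> ltK (fn m).1 d.
  move=> m; rewrite leq_eqVlt => /orP[/eqP->|hm].
    case: Hlt => [h|[-> _]]; last exact: Hs.
    exact (ltK_trans Hwo h (Hs n)).
  by rewrite Hag.
have key : forall m, (m <= n)%N -> ltK (fn m).1 b.
  move=> m hm; case: (ltnP m M) => hM.
    by apply: Hb => // k hk; apply: Pn; apply: leq_trans hk hm.
  exact (zero_lt Hwo (HM m hM) Hc).
suff: exists q, ((fn n).2 < q)%R /\ ltKQ ltK ((fn n).1, q) (sv n).
  case=> q [hq1 hq2].
  pose g := fun m => if (m < n)%N then fn m else if m == n then ((fn n).1, q) else (z, 0%R).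
  have fs : fin_supp ltK g.
    exists n.+1 => m hm; rewrite /g.
    have h1 : (m < n)%N = false by apply/negbTE; rewrite -leqNgt; apply: ltnW.
    have h2 : (m == n) = false by apply/negbTE; rewrite neq_ltn; apply/orP; right.
    by rewrite h1 h2.
  exists (exist _ g fs); split; [|split].
  - move=> m /=; rewrite /g; case: (ltnP m n) => hm.
      by apply: key; apply: ltnW.
    case: eqP => [e|_] /=; first by subst m; exact: key.
    exact (zero_lt Hwo Hz Hc).
  - left; exists n; split => /=.
      by move=> m hm; rewrite /g hm Hag.
    by rewrite /g ltnn eqxx.
  - left; exists n; split => /=.
      by move=> m hm; rewrite /g hm.
    by rewrite /g ltnn eqxx; right.
case: Hlt => [h|[he h]].
- exists ((fn n).2 + 1)%R; split; first by lra.
  by left.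
- exists (((fn n).2 + (sv n).2) / 2)%R; split; first by lra.
  by right; split => //=; lra.
Qed.
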